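(* Let $\upsilon\in(0,1]$, $P_b>0$, $h>0$, $T>0$, $\sigma^2>0$, $B>0$, $L>0$. Consider Problem P4: maximize $S_{\mathrm{off}}(t)=\upsilon P_bhT+\left(\frac{\sigma^2}{h}-\upsilon P_bh\right)t-\frac{\sigma^2}{h}t\,2^{\frac{L}{Bt}}$ over $t$ subject to $0<t<T$ and $S_{\mathrm{off}}(t)\ge 0$. Let $W$ be the principal branch of the Lambert function ($W(x)e^{W(x)}=x$), let $$\rho(h)=\frac{\ln 2}{B\left[1+W\!\left(\frac{\upsilon P_bh^2}{\sigma^2e}-\frac1e\right)\right]},$$ and define $$a''=\frac{\sigma^2}{\upsilon}\left\{1+\left[\frac{L\ln2}{BT}+W\!\left(-e^{-1-\frac{L\ln2}{BT}}\right)\right]\exp\!\left(\frac{L\ln2}{BT}+W\!\left(-e^{-1-\frac{L\ln 2}{BT}}\right)+1\right)\right\}.$$ Then the optimal offloading duration $t^*$ solving P4 satisfies: (1) if $P_bh^2<a''$, Problem P4 is infeasible; (2) if $P_bh^2\ge a''$, $t^*=\rho(h)L$.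
   Context: In the offloading mode the interval $[0,T]$ is split into power transfer of length $T-t$ (harvesting $\upsilon P_bh(T-t)$) followed by fixed-rate transmission of $L$ bits over duration $t$ with bandwidth $B$, channel power gain $h$ and noise variance $\sigma^2$ (energy $(2^{L/(Bt)}-1)\frac{\sigma^2}{h}t$); $S_{\mathrm{off}}$ is the resulting energy savings. *)

(* Defs.v *)
From Stdlib Require Import Reals ClassicalEpsilon.
Open Scope R_scope.

(* Principal branch W_0 of the Lambert function: for x >= -1/e, the unique
   w >= -1 with w * e^w = x.  (Junk value outside the domain.) *)
Definition LambertW0 (x : R) : R :=
  epsilon (inhabits 0) (fun w => -1 <= w /\ w * exp w = x).

Definition S_off (ups Pb h T sigma2 B L t : R) : R :=
  ups * Pb * h * T + (sigma2 / h - ups * Pb * h) * t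
  - sigma2 / h * t * Rpower 2 (L / (B * t)).

Definition P4_feasible (ups Pb h T sigma2 B L t : R) : Prop :=
  0 < t < T /\ 0 <= S_off ups Pb h T sigma2 B L t.

Definition P4_optimal (ups Pb h T sigma2 B L t : R) : Prop :=
  P4_feasible ups Pb h T sigma2 B L t /\
  forall s, P4_feasible ups Pb h T sigma2 B L s ->
    S_off ups Pb h T sigma2 B L s <= S_off ups Pb h T sigma2 B L t.

Definition rho (ups Pb h sigma2 B : R) : R :=
  ln 2 / (B * (1 + LambertW0 (ups * Pb * h ^ 2 / (sigma2 * exp 1) - / exp 1))).

Definition a_pp (ups sigma2 B L T : R) : R :=
  let c := L * ln 2 / (B * T) in
  let w := LambertW0 (- exp (-1 - c)) in
  sigma2 / ups * (1 + (c + w) * exp (c + w + 1)).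

(* Main.v *)
Require Import Defs.
From Stdlib Require Import Reals.
From Stdlib Require Import Lra Psatz ClassicalEpsilon.
Open Scope R_scope.

Lemma W_spec (y : R) : - / exp 1 <= y ->
  -1 <= LambertW0 y /\ LambertW0 y * exp (LambertW0 y) = y.
Proof.
  intro Hy. unfold LambertW0. apply epsilon_spec.
  set (f := fun w => w * exp w - y).
  assert (Hc : continuity f).
  { unfold f. apply continuity_minus.
    - apply continuity_mult.
      + apply derivable_continuous, derivable_id.
      + apply derivable_continuous, derivable_exp.
    - apply continuity_const. intros ? ?; reflexivity. }
  assert (Hle : -1 <= 1 + Rabs y) by (pose proof (Rabs_pos y); lra).
  assert (Hf1 : f (-1) <= 0).
  { unfold f. replace (exp (-1)) with (/ exp 1) by (rewrite <- exp_Ropp; f_equal; ring). lra. }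
  assert (Hf2 : 0 <= f (1 + Rabs y)).
  { unfold f. pose proof (exp_ineq1_le (1 + Rabs y)).
    pose proof (Rabs_pos y). pose proof (Rle_abs y).
    assert (1 <= exp (1 + Rabs y)) by lra. nra. }
  destruct (IVT_cor f (-1) (1 + Rabs y) Hc Hle) as [w [Hw Hfw]].
  { nra. }
  exists w. split; [lra|]. unfold f in Hfw. lra.
Qed.

Lemma exp_strict_lower (d : R) : 0 < d -> exp d * (1 - d) < 1.
Proof.
  intro Hd. assert (H := exp_ineq1 (- d) ltac:(lra)).
  rewrite exp_Ropp in H. pose proof (exp_pos d).
  apply Rmult_lt_compat_l with (r := exp d) in H; [|lra].
  rewrite Rinv_r in H by lra. nra.
Qed.

Definition phi (u : R) := (u - 1) * exp u.
Definition psi (u : R) := exp (- u) + u.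

Lemma phi_strict u v : 0 <= u -> u < v -> phi u < phi v.
Proof.
  intros Hu Huv. unfold phi.
  replace v with (u + (v - u)) by ring. rewrite exp_plus.
  set (d := v - u). assert (Hd : 0 < d) by (unfold d; lra).
  pose proof (exp_ineq1 d ltac:(lra)).
  pose proof (exp_strict_lower d Hd).
  pose proof (exp_pos u). pose proof (exp_pos d).
  set (E := exp u) in *. set (D := exp d) in *.
  assert (K : u - 1 < (u + d - 1) * D).
  { destruct (Rle_lt_dec 1 (u + d)).
    - nra.
    - nra. }
  nra.
Qed.

Lemma psi_strict u v : 0 <= u -> u < v -> psi u < psi v.
Proof.
  intros Hu Huv. unfold psi.
  replace (- v) with (- u + - (v - u)) by ring. rewrite exp_plus.
  set (d := v - u). assert (Hd : 0 < d) by (unfold d; lra).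
  pose proof (exp_ineq1 (- d) ltac:(lra)).
  pose proof (exp_pos (- u)).
  assert (exp (- u) <= 1).
  { rewrite exp_Ropp. pose proof (exp_ineq1_le u). pose proof (exp_pos u).
    apply Rmult_le_reg_l with (exp u); [lra|]. rewrite Rinv_r by lra. lra. }
  assert (0 < exp (- u) * (exp (- d) - (1 + - d))) by (apply Rmult_lt_0_compat; lra).
  assert (0 <= d * (1 - exp (- u))) by (apply Rmult_le_pos; lra).
  replace v with (u + d) by (unfold d; ring). nra.
Qed.

Lemma mono_iff (F : R -> R) :
  (forall u v, 0 <= u -> u < v -> F u < F v) ->
  forall u v, 0 <= u -> 0 <= v -> (u <= v <-> F u <= F v).
Proof.
  intros HF u v Hu Hv. split.
  - intro H. destruct (Rle_lt_or_eq_dec u v H) as [H'|H'].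
    + left. apply HF; auto.
    + subst; lra.
  - intro H. destruct (Rle_lt_dec u v); auto.
    pose proof (HF v u Hv r). lra.
Qed.

Lemma key (A xs a t : R) : 0 < A -> 0 < xs -> (xs - 1) * exp xs = a - 1 -> 0 < t ->
  t * (1 - a) - t * exp (A / t) <= - A * exp xs /\
  (t <> A / xs -> t * (1 - a) - t * exp (A / t) < - A * exp xs).
Proof.
  intros HA Hxs Ha Ht.
  set (x := A / t).
  assert (Hxt : x * t = A) by (unfold x; field; lra).
  assert (Hexp : exp x = exp xs * exp (x - xs)).
  { rewrite <- exp_plus. f_equal. ring. }
  pose proof (exp_pos xs). pose proof (exp_ineq1_le (x - xs)).
  rewrite Hexp.
  set (E := exp xs) in *. set (D := exp (x - xs)) in *.
  assert (Ha' : a = 1 + (xs - 1) * E) by lra.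
  assert (Hp : 0 <= t * E * (D - (1 + (x - xs)))).
  { apply Rmult_le_pos; [apply Rmult_le_pos|]; lra. }
  split.
  - rewrite Ha'. nra.
  - intro Hne. assert (Hxne : x - xs <> 0).
    { intro Hc. apply Hne. assert (Hq : x = xs) by lra. unfold x in Hq.
      rewrite <- Hq. field. lra. }
    pose proof (exp_ineq1 (x - xs) Hxne) as Hs. fold D in Hs.
    assert (Hp' : 0 < t * E * (D - (1 + (x - xs)))).
    { apply Rmult_lt_0_compat; [apply Rmult_lt_0_compat|]; lra. }
    rewrite Ha'. nra.
Qed.

Theorem theorem2 (ups Pb h T sigma2 B L : R) :
  0 < ups <= 1 -> 0 < Pb -> 0 < h -> 0 < T -> 0 < sigma2 -> 0 < B -> 0 < L ->
  (Pb * h ^ 2 < a_pp ups sigma2 B L T ->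
     ~ exists t, P4_feasible ups Pb h T sigma2 B L t) /\
  (a_pp ups sigma2 B L T <= Pb * h ^ 2 ->
     forall t, P4_optimal ups Pb h T sigma2 B L t <->
               t = rho ups Pb h sigma2 B * L).
Proof.
  intros [Hu1 Hu2] HPb Hh HT Hs HB HL.
  assert (Hln2 : 0 < ln 2) by (rewrite <- ln_1; apply ln_increasing; lra).
  assert (He1 : 0 < exp 1) by apply exp_pos.
  set (a := ups * Pb * h ^ 2 / sigma2).
  assert (Ha : 0 < a).
  { unfold a. apply Rdiv_lt_0_compat; [|lra].
    apply Rmult_lt_0_compat; [nra|]. apply pow_lt; lra. }
  set (A := L * ln 2 / B).
  assert (HA : 0 < A) by (unfold A; apply Rdiv_lt_0_compat; nra).
  set (K := sigma2 / h).
  assert (HK : 0 < K) by (unfold K; apply Rdiv_lt_0_compat; lra).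
  set (W1 := LambertW0 (ups * Pb * h ^ 2 / (sigma2 * exp 1) - / exp 1)).
  assert (Harg : ups * Pb * h ^ 2 / (sigma2 * exp 1) - / exp 1 = (a - 1) / exp 1)
    by (unfold a; field; lra).
  destruct (W_spec (ups * Pb * h ^ 2 / (sigma2 * exp 1) - / exp 1)) as [HW1 HW1e].
  { rewrite Harg. unfold Rdiv. pose proof (Rinv_0_lt_compat _ He1). nra. }
  fold W1 in HW1, HW1e. rewrite Harg in HW1e.
  set (xs := 1 + W1).
  assert (Hxs_eq : (xs - 1) * exp xs = a - 1).
  { unfold xs. rewrite exp_plus. replace (1 + W1 - 1) with W1 by ring.
    replace (a - 1) with ((a - 1) / exp 1 * exp 1) by (field; lra).
    rewrite <- HW1e. ring. }
  assert (Hxs : 0 < xs).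
  { unfold xs. destruct (Rle_lt_or_eq_dec _ _ HW1) as [H|H]; [lra|].
    exfalso. rewrite <- H in HW1e.
    replace (-1) with (- (1)) in HW1e by ring. rewrite exp_Ropp in HW1e.
    assert (a - 1 = - 1) .
    { apply (Rmult_eq_reg_r (/ exp 1)). unfold Rdiv in HW1e. lra.
      apply Rinv_neq_0_compat; lra. }
    lra. }
  set (ts := A / xs).
  assert (Hts_pos : 0 < ts) by (unfold ts; apply Rdiv_lt_0_compat; lra).
  assert (Hrho : rho ups Pb h sigma2 B * L = ts).
  { assert (1 + W1 <> 0) by (unfold xs in Hxs; lra).
    unfold rho. fold W1. unfold ts, A, xs. field. lra. }
  rewrite Hrho.
  assert (Seq : forall t, 0 < t -> S_off ups Pb h T sigma2 B L t =
                 K * a * T + K * (t * (1 - a) - t * exp (A / t))).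
  { intros t Ht. unfold S_off, Rpower.
    replace (L / (B * t) * ln 2) with (A / t) by (unfold A; field; lra).
    unfold K, a. field. lra. }
  set (Smax := K * a * T - K * A * exp xs).
  assert (Hbound : forall t, 0 < t -> S_off ups Pb h T sigma2 B L t <= Smax /\
            (t <> ts -> S_off ups Pb h T sigma2 B L t < Smax)).
  { intros t Ht. rewrite (Seq t Ht).
    destruct (key A xs a t HA Hxs Hxs_eq Ht) as [K1 K2]. unfold Smax. split.
    - nra.
    - intro Hne. specialize (K2 Hne). nra. }
  assert (HSts : S_off ups Pb h T sigma2 B L ts = Smax).
  { rewrite (Seq ts Hts_pos). replace (A / ts) with xs by (unfold ts; field; lra).
    unfold Smax. replace a with (1 + (xs - 1) * exp xs) by lra.
    unfold ts. field. lra. }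
  assert (Hts_lt : 0 <= Smax -> ts < T).
  { intro H0. unfold Smax in H0.
    assert (a * T - A * exp xs >= 0) by nra.
    pose proof (exp_ineq1 xs ltac:(lra)).
    assert (a < xs * exp xs) by lra.
    assert (A < xs * T) by nra.
    unfold ts. apply (Rmult_lt_reg_r xs); [lra|].
    replace (A / xs * xs) with A by (field; lra). lra. }
  set (c := L * ln 2 / (B * T)).
  assert (Hc : 0 < c) by (unfold c; apply Rdiv_lt_0_compat; nra).
  set (w := LambertW0 (- exp (-1 - c))).
  destruct (W_spec (- exp (-1 - c))) as [Hw Hwe].
  { apply Ropp_le_contravar. rewrite <- exp_Ropp. left. apply exp_increasing. lra. }
  fold w in Hw, Hwe.
  set (z := c + w + 1).
  assert (Hz : 0 <= z) by (unfold z; lra).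
  assert (Hpsiz : psi z = 1 + c).
  { unfold psi. rewrite exp_Ropp.
    assert (Hez : exp z = exp w * exp (1 + c)).
    { rewrite <- exp_plus. f_equal. unfold z. ring. }
    assert (Hm : exp (-1 - c) * exp (1 + c) = 1).
    { rewrite <- exp_plus. replace (-1 - c + (1 + c)) with 0 by ring. apply exp_0. }
    assert (Hk : (z - 1 - c) * exp z = -1).
    { rewrite Hez. replace (z - 1 - c) with w by (unfold z; ring).
      rewrite <- Rmult_assoc, Hwe. lra. }
    pose proof (exp_pos z).
    apply (Rmult_eq_reg_r (exp z)); [|lra].
    rewrite Rmult_plus_distr_r, Rinv_l by lra. nra. }
  assert (Happ : a_pp ups sigma2 B L T = sigma2 / ups * (1 + phi z)).
  { unfold phi, z. replace (c + w + 1 - 1) with (c + w) by ring.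
    unfold a_pp, w, c. reflexivity. }
  assert (Hdiff1 : Pb * h ^ 2 - a_pp ups sigma2 B L T = sigma2 / ups * (phi xs - phi z)).
  { rewrite Happ. unfold phi. rewrite Hxs_eq. unfold a. field. lra. }
  assert (Hdiff2 : Smax = K * T * exp xs * (psi xs - psi z)).
  { rewrite Hpsiz. unfold psi, Smax. rewrite exp_Ropp.
    replace A with (c * T) by (unfold A, c; field; lra).
    replace a with (1 + (xs - 1) * exp xs) by lra.
    field. pose proof (exp_pos xs); lra. }
  assert (Hs1 : 0 < sigma2 / ups) by (apply Rdiv_lt_0_compat; lra).
  assert (Hs2 : 0 < K * T * exp xs)
    by (apply Rmult_lt_0_compat; [nra | apply exp_pos]).
  assert (Hxs0 : 0 <= xs) by lra.
  split.
  - intros Hlt [t [[Ht1 Ht2] Ht3]].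
    assert (Hp : phi xs < phi z) by nra.
    assert (Hxz : xs < z).
    { destruct (Rlt_le_dec xs z) as [H|H]; [exact H|].
      apply (mono_iff phi phi_strict z xs Hz Hxs0) in H. lra. }
    pose proof (psi_strict xs z Hxs0 Hxz).
    assert (Smax < 0) by nra.
    destruct (Hbound t Ht1). lra.
  - intros Hge.
    assert (Hp : phi z <= phi xs) by nra.
    apply (mono_iff phi phi_strict z xs Hz Hxs0) in Hp.
    apply (mono_iff psi psi_strict z xs Hz Hxs0) in Hp.
    assert (HS0 : 0 <= Smax) by nra.
    assert (Hfeas : P4_feasible ups Pb h T sigma2 B L ts).
    { split; [split; [lra | apply Hts_lt; lra] | rewrite HSts; lra]. }
    intro t. split.
    + intros [[[Ht1 Ht2] Ht3] Hopt].
      specialize (Hopt ts Hfeas). rewrite HSts in Hopt.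
      destruct (Req_dec t ts) as [E|E]; [exact E|].
      destruct (Hbound t Ht1) as [_ Hlt]. specialize (Hlt E). lra.
    + intro E. subst t. split; [exact Hfeas|].
      intros s [[Hs1' Hs2'] Hs3']. rewrite HSts. apply (Hbound s Hs1').
Qed.
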